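(* Let $d,n,k\ge1$, fix vectors $x^{(1)},\dots,x^{(n+1)}\in\mathbb{R}^d$ and $w_\star\in\mathbb{R}^d$, and set $y^{(i)}=\langle x^{(i)},w_\star\rangle$ for $i=1,\dots,n$. Let $$Z_0=\begin{bmatrix} x^{(1)} & \cdots & x^{(n)} & x^{(n+1)}\\ y^{(1)} & \cdots & y^{(n)} & 0\end{bmatrix}\in\mathbb{R}^{(d+1)\times(n+1)},\qquad M=\begin{bmatrix} I_n & 0\\ 0& 0\end{bmatrix}\in\mathbb{R}^{(n+1)\times(n+1)}.$$ Let $A_0,\dots,A_k\in\mathbb{R}^{d\times d}$ be symmetric, and set $P_i=\begin{bmatrix}0_{d\times d}&0\\0&1\end{bmatrix}$, $Q_i=\begin{bmatrix}A_i&0\\0&0\end{bmatrix}$, and $Z_{i+1}=Z_i+\frac1n P_iZ_iM(Z_i^\top Q_iZ_i)$ for $i=0,\dots,k$. Define $R_{w_\star}(w)=\frac{1}{2n}\sum_{i=1}^n\big(w^\top x^{(i)}-w_\star^\top x^{(i)}\big)^2$. Then there exist vectors $w^{\mathrm{gd}}_0,\dots,w^{\mathrm{gd}}_{k+1}\in\mathbb{R}^d$ such that the predicted label after layer $i$ satisfies $[Z_i]_{d+1,n+1}=-\langle x^{(n+1)},w^{\mathrm{gd}}_i\rangle$ for every $i\in\{0,\dots,k+1\}$, and such that for every $i\in\{0,\dots,k\}$ they are related by the preconditioned gradient step $$w^{\mathrm{gd}}_{i+1}=w^{\mathrm{gd}}_i+A_i\nabla R_{w_\star}(w^{\mathrm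{gd}}_i).$$
   Context: $[X]_{i,j}$ denotes the $(i,j)$ entry of a matrix $X$. The map $Z\mapsto PZM(Z^\top QZ)$ is a linear (softmax-free) self-attention layer with mask $M$. *)

(* Defs.v *)
From HB Require Import structures.
From mathcomp Require Import all_boot all_order all_algebra.
From mathcomp Require Import all_classical all_reals all_analysis.
Set Implicit Arguments. Unset Strict Implicit. Unset Printing Implicit Defensive.
Import Order.TTheory GRing.Theory Num.Theory.
Import numFieldNormedType.Exports.
Local Open Scope ring_scope.

Definition grad (R : realType) (d : nat) (f : 'cV[R]_d -> R^o) (w : 'cV[R]_d)
  : 'cV[R]_d := \col_j ('D_(delta_mx j 0) f w).

Definition risk (R : realType) (d n : nat) (xs : 'I_n -> 'cV[R]_d)
  (wstar w : 'cV[R]_d) : R^o :=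
  (2 * n%:R)^-1 * \sum_(i < n) (((w^T *m xs i) 0 0 - (wstar^T *m xs i) 0 0) ^+ 2).

(* Input matrix Z_0 in R^{(d+1) x (n+1)}; xs i = x^(i+1), xq = x^(n+1). *)
Definition Z0 (R : realType) (d n : nat) (xs : 'I_n -> 'cV[R]_d) (xq wstar : 'cV[R]_d)
  : 'M[R]_(d + 1, n + 1) :=
  block_mx (\matrix_(r < d, c < n) xs c r 0) xq
           (\row_(c < n) ((xs c)^T *m wstar) 0 0) (0 : 'M[R]_(1, 1)).

Definition maskM (R : realType) (n : nat) : 'M[R]_(n + 1) :=
  block_mx (1%:M : 'M[R]_n) 0 0 (0 : 'M[R]_1).

Definition Pmat (R : realType) (d : nat) : 'M[R]_(d + 1) :=
  block_mx (0 : 'M[R]_d) 0 0 (1%:M : 'M[R]_1).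

Definition Qmat (R : realType) (d : nat) (A : 'M[R]_d) : 'M[R]_(d + 1) :=
  block_mx A 0 0 (0 : 'M[R]_1).

Fixpoint Zlayer (R : realType) (d n : nat) (Z0m : 'M[R]_(d + 1, n + 1))
  (A : nat -> 'M[R]_d) (i : nat) : 'M[R]_(d + 1, n + 1) :=
  match i with
  | 0 => Z0m
  | i'.+1 => let Z := Zlayer Z0m A i' in
      Z + n%:R^-1 *: (Pmat R d *m Z *m maskM R n *m (Z^T *m Qmat (A i') *m Z))
  end.

(* Main.v *)
Require Import Defs.
From HB Require Import structures.
From mathcomp Require Import all_boot all_order all_algebra.
From mathcomp Require Import all_classical all_reals all_analysis.
From mathcomp Require Import ring.
Import Order.TTheory GRing.Theory Num.Theory.
Import numFieldNormedType.Exports.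
Local Open Scope classical_set_scope.
Local Open Scope ring_scope.
Lemma is_derive_quad (R : realType) (V : normedModType R) (f : V -> R^o) (a v : V) (b c : R) :
  (forall h : R, h != 0 -> h^-1 * (f (h *: v + a) - f a) = b + h * c) ->
  is_derive a v f b.
Proof.
move=> H.
have L : (fun h : R => h^-1 *: ((f \o shift a) (h *: v) - f a)) @ 0^' --> (b : R^o).
  apply: (@cvg_trans _ ((fun h : R => (b + h * c : R^o)) @ 0^')).
    apply: near_eq_cvg; near=> h; rewrite /= /shift -H //.
    by near: h; exact: nbhs_dnbhs_neq.
  have Hc : (fun h : R => (b + h * c : R^o)) @ 0 --> (b + 0 * c : R^o).
    apply: cvgD; first exact: cvg_cst.
    apply: cvgMl; exact: cvg_id.
  rewrite mul0r addr0 in Hc.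
  exact: cvg_within_filter Hc.
apply: DeriveDef; first by apply/cvg_ex; exists b.
exact: cvg_lim L.
Unshelve. all: by end_near.
Qed.
Definition Xmat {R : realType} {d n : nat} (xs : 'I_n -> 'cV[R]_d) : 'M[R]_(d, n) :=
  \matrix_(r < d, c < n) xs c r 0.

Lemma dotE {R : realType} {d : nat} (u x : 'cV[R]_d) :
  (u^T *m x) 0 0 = \sum_r u r 0 * x r 0.
Proof. by rewrite mxE; apply: eq_bigr => r _; rewrite mxE. Qed.

Lemma grad_risk (R : realType) (d n : nat) (xs : 'I_n -> 'cV[R]_d) (wstar w : 'cV[R]_d) :
  grad (risk xs wstar) w = n%:R^-1 *: (Xmat xs *m ((Xmat xs)^T *m (w - wstar))).
Proof.
apply/matrixP => j z; rewrite ord1 [LHS]mxE.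
set t := fun i : 'I_n => (w^T *m xs i) 0 0 - (wstar^T *m xs i) 0 0.
set q := fun i : 'I_n => xs i j 0.
have D : is_derive w (delta_mx j 0) (risk xs wstar) (n%:R^-1 * \sum_i q i * t i).
  apply: (@is_derive_quad R _ (risk xs wstar) w (delta_mx j 0) _ ((2 * n%:R)^-1 * \sum_i q i ^+ 2)).
  move=> h h0.
  have E : forall i, ((h *: delta_mx j 0 + w)^T *m xs i) 0 0 = h * q i + (w^T *m xs i) 0 0.
    move=> i; rewrite !dotE.
    transitivity (\sum_(r < d) (h * ((delta_mx j 0 : 'cV[R]_d) r 0 * xs i r 0) + w r 0 * xs i r 0)).
      by apply: eq_bigr => r _; rewrite !mxE; ring.
    rewrite big_split -mulr_sumr /=; congr (_ * _ + _).
    rewrite (bigD1 j) //= big1 ?addr0; first by rewrite !mxE eqxx /= mul1r.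
    by move=> r /negbTE rj; rewrite !mxE rj /= mul0r.
  rewrite /risk.
  under eq_bigr => i _ do rewrite E.
  rewrite -mulrBr -sumrB mulrCA mulr_sumr mulr_sumr.
  rewrite !mulr_sumr -big_split; apply: eq_bigr => i _; rewrite /t invfM.
  set m := n%:R^-1.
  have h2 : (2 : R) != 0 by rewrite pnatr_eq0.
  rewrite -[X in _ = X]/(_ + _ : R).
  by field.
rewrite (derive_val (is_derive := D)).
rewrite mxE; congr (_ * _); rewrite mxE; apply: eq_bigr => c _.
rewrite /q /t !mxE -sumrB; congr (_ * _); apply: eq_bigr => r _.
by rewrite /Xmat !mxE; ring.
Qed.
Fixpoint wgdf {R : realType} {d n : nat} (xs : 'I_n -> 'cV[R]_d) (wstar : 'cV[R]_d)
  (A : nat -> 'M[R]_d) (i : nat) : 'cV[R]_d :=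
  match i with
  | 0 => 0
  | i'.+1 => wgdf xs wstar A i' + A i' *m grad (risk xs wstar) (wgdf xs wstar A i')
  end.

Lemma tr11 (R : realType) (a : 'M[R]_1) : a^T = a.
Proof. by apply/matrixP => i j; rewrite !ord1 mxE. Qed.

Lemma Zlayer_block (R : realType) (d n k : nat) (xs : 'I_n -> 'cV[R]_d) (xq wstar : 'cV[R]_d)
  (A : nat -> 'M[R]_d) (hA : forall i, (i <= k)%N -> (A i)^T = A i) i :
  (i <= k.+1)%N ->
  Zlayer (Z0 xs xq wstar) A i =
  block_mx (Xmat xs) xq ((wstar - wgdf xs wstar A i)^T *m Xmat xs)
    (- (xq^T *m wgdf xs wstar A i)).
Proof.
elim: i => [_|i IH hi].
  rewrite /= subr0 mulmx0 oppr0 /Z0; congr block_mx.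
  apply/matrixP => z c; rewrite !ord1 !mxE; apply: eq_bigr => r _; rewrite !mxE.
  by rewrite mulrC.
rewrite /= IH 1?ltnW // /Pmat /maskM /Qmat.
rewrite !tr_block_mx.
rewrite (@mulmx_block _ d 1 d 1 n 1) ?mul0mx ?mulmx0 ?mul1mx ?mulmx1 ?addr0 ?add0r.
rewrite (@mulmx_block _ d 1 n 1 n 1) ?mul0mx ?mulmx0 ?mul1mx ?mulmx1 ?addr0 ?add0r.
rewrite (@mulmx_block _ n 1 d 1 d 1) ?mul0mx ?mulmx0 ?mul1mx ?mulmx1 ?addr0 ?add0r.
rewrite (@mulmx_block _ n 1 d 1 n 1) ?mul0mx ?mulmx0 ?mul1mx ?mulmx1 ?addr0 ?add0r.
rewrite (@mulmx_block _ d 1 n 1 n 1) ?mul0mx ?mulmx0 ?mul1mx ?mulmx1 ?addr0 ?add0r.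
rewrite scale_block_mx add_block_mx ?scaler0 ?addr0.
have hAi := hA i hi.
rewrite grad_risk.
set w := wgdf xs wstar A i; set X := Xmat xs; set u := wstar - w.
rewrite -(opprB wstar w) -/u !mulmxN scalerN mulmxN.
rewrite (opprD w) opprK addrA -/u.
clearbody u. congr block_mx.
  rewrite linearD /= mulmxDl; congr (_ + _).
  rewrite -!scalemxAr linearZ /= -!scalemxAl; congr (_ *: _).
  by rewrite !trmx_mul hAi trmxK !mulmxA.
rewrite mulmxDr opprD; congr (_ + _).
rewrite mulmxN opprK -!scalemxAr; congr (_ *: _).
by rewrite -[LHS]tr11 !trmx_mul !trmxK hAi !mulmxA.
Qed.

Local Close Scope classical_set_scope.
Theorem lemma1 (R : realType) (d n k : nat) (hd : (0 < d)%N) (hn : (0 < n)%N)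
  (hk : (0 < k)%N) (xs : 'I_n -> 'cV[R]_d) (xq wstar : 'cV[R]_d)
  (A : nat -> 'M[R]_d) (hA : forall i, (i <= k)%N -> (A i)^T = A i) :
  exists wgd : nat -> 'cV[R]_d,
    (forall i, (i <= k.+1)%N ->
       Zlayer (Z0 xs xq wstar) A i (rshift d (ord0 : 'I_1)) (rshift n (ord0 : 'I_1))
       = - ((xq^T *m wgd i) 0 0)) /\
    (forall i, (i <= k)%N ->
       wgd i.+1 = wgd i + A i *m grad (risk xs wstar) (wgd i)).
Proof.
exists (wgdf xs wstar A); split; last by move=> i _; reflexivity.
move=> i hi; rewrite (@Zlayer_block R d n k xs xq wstar A hA i hi) block_mxEdr.
by rewrite mxE.
Qed.
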